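(* Let $s>\mu_{obs}$, $\theta=sm-n$, $F\in\mathbb{R}^{p\times n}$, $L\in\mathbb{R}^{n\times m}$, and let $K_{G,s}\in\mathbb{R}^{\theta\times s(p+m)}$. Then $$K_{G,s}I_{G,s}(F)=0\quad\text{and}\quad\operatorname{rank}\big(K_{G,s}I_{C,s}(F,L)\big)=\theta$$ hold if and only if $K_{G,s}=K_2\,[\,-\mathcal{T}_{s,s}(G)\ \ I_{sm}\,]$ for some $K_2\in\mathbb{R}^{\theta\times sm}$ with $K_2\mathcal{O}_s=0$ and $\operatorname{rank}K_2=\theta$. In that case, for every solution $(u,y,r,\hat x)$ of the kernel-based model with gain $L$ on an interval containing $[k-n+1,k+s]$, the residual $r_K(k):=K_{G,s}\begin{bmatrix}u_s(k)\\ y_s(k)\end{bmatrix}$ satisfies $r_K(k)=K_2\,\bar r_s(k)$, where $\bar r_s(k)$ is the vector of the last $sm$ entries of $R_{s+n}r_{s+n}(k-n)$, and $R_{s+n}\in\mathbb{R}^{(s+n)m\times(s+n)m}$ is block lower-triangular Toeplitz with $(i,j)$ block $CA^{i-j-1}L$ ($i>j$), $I_m$ ($i=j$), $0$ ($i<j$).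
   Context: Consider the discrete-time LTI system $x(k+1)=Ax(k)+Bu(k)$, $y(k)=Cx(k)+Du(k)$ with $u\in\mathbb{R}^p$, $x\in\mathbb{R}^n$, $y\in\mathbb{R}^m$, $n\ge 1$, and $(A,B,C,D)$ a minimal (controllable and observable) realization. For a sequence $\phi$, $\phi_s(k)=[\phi(k+1)^T,\dots,\phi(k+s)^T]^T$. $\mathcal{O}_s=[C^T,(CA)^T,\dots,(CA^{s-1})^T]^T$; $\mu_{obs}$ is the smallest integer $\nu$ with $\operatorname{rank}\mathcal{O}_\nu=n$. $\mathcal{T}_{s,s}(G)\in\mathbb{R}^{sm\times sp}$ is block lower-triangular Toeplitz with $(i,j)$ block $CA^{i-j-1}B$ ($i>j$), $D$ ($i=j$), $0$ ($i<j$). For $F\in\mathbb{R}^{p\times n}$, $A_F=A+BF$, $C_F=C+DF$. Kernel-based model with gain $L$: $\hat x(k+1)=A\hat x(k)+Bu(k)+Lr(k)$, $y(k)=C\hat x(k)+Du(k)+r(k)$. Finite-sample image representation: $M_s(F)\in\mathbb{R}^{sp\times(s+n)p}$, $N_s(F)\in\mathbb{R}^{sm\times(s+n)p}$ with $(l,j)$ blocks ($l=1,\dots,s$; $j=1,\dots,s+n$) $M_{n+l-j}$, $N_{n+l-j}$, where $M_k=FA_F^{k-1}B$ ($k\ge1$), $M_0=I_p$, $M_k=0$ ($k<0$), $N_k=C_FA_F^{k-1}B$ ($k\ge1$), $N_0=D$, $N_k=0$ ($k<0$); $I_{G,s}(F)=\begin{bmatrix}M_s(F)\\ N_s(F)\end{bmatrix}$.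 For gains $F,L$: $\hat Y_s(F,L)$, $\hat X_s(F,L)$ with $(l,j)$ blocks $\hat Y_{n+l-j}$, $\hat X_{n+l-j}$, where $\hat Y_k=FA_F^{k-1}L$ ($k\ge1$), $\hat Y_k=0$ ($k\le0$), $\hat X_k=C_FA_F^{k-1}L$ ($k\ge1$), $\hat X_0=I_m$, $\hat X_k=0$ ($k<0$); $I_{C,s}(F,L)=\begin{bmatrix}\hat Y_s(F,L)\\ \hat X_s(F,L)\end{bmatrix}$. *)

(* Defs.v *)
From HB Require Import structures.
From mathcomp Require Import all_boot all_order all_algebra.
From mathcomp Require Import reals.
Set Implicit Arguments. Unset Strict Implicit. Unset Printing Implicit Defensive.
Import Order.TTheory GRing.Theory Num.Theory.
Local Open Scope ring_scope.

(* Block indexing: an index i : 'I_(a*r) lies in block i %/ r (0-based),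
   at position i %% r inside the block. *)
Lemma mod_ord_lt a r (i : 'I_(a * r)) : (i %% r < r)%N.
Proof.
case: r i => [|r] i; last by rewrite ltn_mod.
by case: i => i; rewrite muln0.
Qed.

Definition mod_ord a r (i : 'I_(a * r)) : 'I_r := Ordinal (mod_ord_lt i).

Section Defs.
Variable R : realType.

Definition blockmx a b r c (f : nat -> nat -> 'M[R]_(r, c)) : 'M[R]_(a * r, b * c) :=
  \matrix_(i, j) f (i %/ r)%N (j %/ c)%N (mod_ord i) (mod_ord j).

Definition stackv a r (f : nat -> 'cV[R]_r) : 'cV[R]_(a * r) :=
  \col_i f (i %/ r)%N (mod_ord i) 0.

Variables (n m p : nat).

Definition obsmx (A : 'M[R]_n) (C : 'M[R]_(m, n)) (nu : nat) : 'M[R]_(nu * m, n) :=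
  \matrix_(i, j) (C *m A ^+ (i %/ m)%N) (mod_ord i) j.

Definition ctrbmx (A : 'M[R]_n) (B : 'M[R]_(n, p)) : 'M[R]_(n, n * p) :=
  \matrix_(i, j) (A ^+ (j %/ p)%N *m B) i (mod_ord j).

Definition controllable (A : 'M[R]_n) (B : 'M[R]_(n, p)) : Prop :=
  \rank (ctrbmx A B) = n.

Definition observable (A : 'M[R]_n) (C : 'M[R]_(m, n)) : Prop :=
  \rank (obsmx A C n) = n.

(* smallest nu with rank O_nu = n (searched in 0..n; for an observable pair
   this is the true minimum since rank O_n = n) *)
Definition mu_obs (A : 'M[R]_n) (C : 'M[R]_(m, n)) : nat :=
  find (fun nu => \rank (obsmx A C nu) == n) (iota 0 n.+1).

Definition toeplitzG (s : nat) (A : 'M[R]_n) (B : 'M[R]_(n, p)) (C : 'M[R]_(m, n))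
    (D : 'M[R]_(m, p)) : 'M[R]_(s * m, s * p) :=
  blockmx s s (fun i j => if (j < i)%N then C *m A ^+ (i - j - 1) *m B
                          else if i == j then D else 0).

Definition AF (A : 'M[R]_n) (B : 'M[R]_(n, p)) (F : 'M[R]_(p, n)) : 'M[R]_n :=
  A + B *m F.
Definition CF (C : 'M[R]_(m, n)) (D : 'M[R]_(m, p)) (F : 'M[R]_(p, n)) : 'M[R]_(m, n) :=
  C + D *m F.

(* M_k, N_k for k >= 0 (k < 0 handled in Ms / Ns) *)
Definition Mk A B F (k : nat) : 'M[R]_p :=
  if k is k'.+1 then F *m AF A B F ^+ k' *m B else 1%:M.
Definition Nk A B C D F (k : nat) : 'M[R]_(m, p) :=
  if k is k'.+1 then CF C D F *m AF A B F ^+ k' *m B else D.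

(* block (l,j) (0-based; same difference as 1-based) is M_{n+l-j} *)
Definition Ms s A B F : 'M[R]_(s * p, (s + n) * p) :=
  blockmx s (s + n) (fun l j => if (j <= n + l)%N then Mk A B F (n + l - j) else 0).
Definition Ns s A B C D F : 'M[R]_(s * m, (s + n) * p) :=
  blockmx s (s + n) (fun l j => if (j <= n + l)%N then Nk A B C D F (n + l - j) else 0).

Definition IG s A B C D F : 'M[R]_(s * p + s * m, (s + n) * p) :=
  col_mx (Ms s A B F) (Ns s A B C D F).

Definition Yhk A B F (L : 'M[R]_(n, m)) (k : nat) : 'M[R]_(p, m) :=
  if k is k'.+1 then F *m AF A B F ^+ k' *m L else 0.
Definition Xhk A B C D F (L : 'M[R]_(n, m)) (k : nat) : 'M[R]_m :=
  if k is k'.+1 then CF C D F *m AF A B F ^+ k' *m L else 1%:M.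

Definition Yhs s A B F L : 'M[R]_(s * p, (s + n) * m) :=
  blockmx s (s + n) (fun l j => if (j <= n + l)%N then Yhk A B F L (n + l - j) else 0).
Definition Xhs s A B C D F L : 'M[R]_(s * m, (s + n) * m) :=
  blockmx s (s + n) (fun l j => if (j <= n + l)%N then Xhk A B C D F L (n + l - j) else 0).

Definition IC s A B C D F L : 'M[R]_(s * p + s * m, (s + n) * m) :=
  col_mx (Yhs s A B F L) (Xhs s A B C D F L).

Definition Rmat (N : nat) (A : 'M[R]_n) (C : 'M[R]_(m, n)) (L : 'M[R]_(n, m)) :
    'M[R]_(N * m) :=
  blockmx N N (fun i j => if (j < i)%N then C *m A ^+ (i - j - 1) *m L
                          else if i == j then 1%:M else 0).

Definition sigs (N : nat) q (phi : int -> 'cV[R]_q) (k : int) : 'cV[R]_(N * q) :=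
  stackv N (fun i => phi (k + (i.+1)%:Z)).

Definition rbar (s : nat) A C L (r : int -> 'cV[R]_m) (k : int) : 'cV[R]_(s * m) :=
  dsubmx (castmx (mulnDl n s m, erefl 1%N)
            (Rmat (n + s) A C L *m sigs (n + s) r (k - n%:Z))).

End Defs.

(* Main.v *)
Require Import Defs.
From HB Require Import structures.
From mathcomp Require Import all_boot all_order all_algebra.
From mathcomp Require Import reals.
From mathcomp Require Import zify.
Set Implicit Arguments. Unset Strict Implicit. Unset Printing Implicit Defensive.
Import Order.TTheory GRing.Theory Num.Theory.
Local Open Scope ring_scope.

Lemma sum_nat_mul (V : nmodType) (H : nat -> V) b c :
  \sum_(0 <= x < b * c) H x = \sum_(0 <= k < b) \sum_(0 <= z < c) H (k * c + z)%N.
Proof.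
elim: b => [|b IH]; first by rewrite mul0n !big_geq.
rewrite mulSnr big_nat_recr //= -IH (@big_cat_nat _ _ _ (b * c)) ?leq_addr //=.
congr (_ + _).
rewrite -{1}(add0n (b*c)%N) big_addn addKn.
by apply: eq_big_nat => z _; rewrite addnC.
Qed.

Lemma sum_ord_mul (V : nmodType) b c (G : nat -> 'I_c -> V) :
  \sum_(x < b * c) G (x %/ c)%N (mod_ord x) = \sum_(k < b) \sum_(z < c) G k z.
Proof.
case: c G => [|c] G.
  rewrite big1; last by move=> x; have := ltn_ord x; rewrite {2}muln0.
  by rewrite big1 // => k _; rewrite big1 // => -[].
pose H x := G (x %/ c.+1)%N (inord (x %% c.+1)).
transitivity (\sum_(x < b * c.+1) H x).
  apply: eq_bigr => x _; rewrite /H; congr G; apply: val_inj.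
  by rewrite /= inordK // ltn_mod.
rewrite -(big_mkord xpredT H) sum_nat_mul big_mkord; apply: eq_bigr => k _.
rewrite big_mkord; apply: eq_bigr => z _; rewrite /H.
rewrite divnMDl // divn_small // addn0 modnMDl modn_small //.
by congr G; apply: val_inj; rewrite /= inordK.
Qed.

Section Gen.
Variable R : realType.

Definition bcol a r q (g : nat -> 'M[R]_(r,q)) : 'M[R]_(a*r, q) :=
  \matrix_(i, j) g (i %/ r)%N (mod_ord i) j.
Definition brow b c q (g : nat -> 'M[R]_(q,c)) : 'M[R]_(q, b*c) :=
  \matrix_(i, j) g (j %/ c)%N i (mod_ord j).

Lemma blockmx_mul a b d r c e (f : nat -> nat -> 'M[R]_(r, c)) (g : nat -> nat -> 'M[R]_(c, e)) :
  blockmx a b f *m blockmx b d g = blockmx a d (fun i j => \sum_(k < b) f i k *m g k j).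
Proof.
apply/matrixP => i j; rewrite !mxE summxE.
under [RHS]eq_bigr => k _ do rewrite mxE.
rewrite -(sum_ord_mul _ (fun k z => f (i %/ r)%N k (mod_ord i) z * g k (j %/ e)%N z (mod_ord j))).
by apply: eq_bigr => x _; rewrite !mxE.
Qed.

Lemma blockmx_mul_bcol a b r c q (f : nat -> nat -> 'M[R]_(r, c)) (g : nat -> 'M[R]_(c, q)) :
  blockmx a b f *m bcol b g = bcol a (fun i => \sum_(k < b) f i k *m g k).
Proof.
apply/matrixP => i j; rewrite !mxE summxE.
under [RHS]eq_bigr => k _ do rewrite mxE.
rewrite -(sum_ord_mul _ (fun k z => f (i %/ r)%N k (mod_ord i) z * g k z j)).
by apply: eq_bigr => x _; rewrite !mxE.
Qed.

Lemma brow_mul_blockmx b d q c e (g : nat -> 'M[R]_(q, c)) (f : nat -> nat -> 'M[R]_(c, e)) :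
  brow b g *m blockmx b d f = brow d (fun j => \sum_(k < b) g k *m f k j).
Proof.
apply/matrixP => i j; rewrite !mxE summxE.
under [RHS]eq_bigr => k _ do rewrite mxE.
rewrite -(sum_ord_mul _ (fun k z => g k i z * f k (j %/ e)%N z (mod_ord j))).
by apply: eq_bigr => x _; rewrite !mxE.
Qed.

Lemma bcol_mul_brow a b r q c (g : nat -> 'M[R]_(r, q)) (h : nat -> 'M[R]_(q, c)) :
  bcol a g *m brow b h = blockmx a b (fun i j => g i *m h j).
Proof. by apply/matrixP => i j; rewrite !mxE; apply: eq_bigr => k _; rewrite !mxE. Qed.

Lemma mul_brow b c q q' (v : 'M[R]_(q', q)) (g : nat -> 'M[R]_(q, c)) :
  v *m brow b g = brow b (fun k => v *m g k).
Proof. by apply/matrixP => i j; rewrite !mxE; apply: eq_bigr => k _; rewrite !mxE. Qed.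

Lemma bcol_mulr a r q q' (g : nat -> 'M[R]_(r, q)) (x : 'M[R]_(q, q')) :
  bcol a (fun i => g i *m x) = bcol a g *m x.
Proof. by apply/matrixP => i j; rewrite !mxE; apply: eq_bigr => k _; rewrite !mxE. Qed.

Lemma blockmxD a b r c (f g : nat -> nat -> 'M[R]_(r, c)) :
  blockmx a b f + blockmx a b g = blockmx a b (fun i j => f i j + g i j).
Proof. by apply/matrixP => i j; rewrite !mxE. Qed.

Lemma bcolD a r q (f g : nat -> 'M[R]_(r, q)) :
  bcol a f + bcol a g = bcol a (fun i => f i + g i).
Proof. by apply/matrixP => i j; rewrite !mxE. Qed.

Lemma div_lt a r (i : 'I_(a * r)) : (i %/ r < a)%N.
Proof. by rewrite ltn_divLR ?ltn_ord //; case: r i => [|r] [i /=]; rewrite ?muln0. Qed.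

Lemma blockmx_ext a b r c (f g : nat -> nat -> 'M[R]_(r, c)) :
  (forall i j, (i < a)%N -> (j < b)%N -> f i j = g i j) -> blockmx a b f = blockmx a b g.
Proof. by move=> H; apply/matrixP => i j; rewrite !mxE H // div_lt. Qed.

Lemma bcol_ext a r q (f g : nat -> 'M[R]_(r, q)) :
  (forall i, (i < a)%N -> f i = g i) -> bcol a f = bcol a g.
Proof. by move=> H; apply/matrixP => i j; rewrite !mxE H // div_lt. Qed.

Lemma brow_ext b c q (f g : nat -> 'M[R]_(q, c)) :
  (forall i, (i < b)%N -> f i = g i) -> brow b f = brow b g.
Proof. by move=> H; apply/matrixP => i j; rewrite !mxE H // div_lt. Qed.

Lemma brow_eq0 b c q (g : nat -> 'M[R]_(q, c)) : brow b g = 0 -> forall k, (k < b)%N -> g k = 0.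
Proof.
move=> H k kb; apply/matrixP => i z.
have lt : (k * c + z < b * c)%N.
  have := ltn_ord z; nia.
have := congr1 (fun M : 'M[R]_(q, b * c) => M i (Ordinal lt)) H; rewrite !mxE /=.
have cp : (0 < c)%N by apply: leq_ltn_trans (ltn_ord z).
rewrite divnMDl // divn_small // addn0 => <-; congr (g k i _).
by apply: val_inj; rewrite /= modnMDl modn_small.
Qed.

Lemma stackv_bcol a r (f : nat -> 'cV[R]_r) : stackv a f = bcol a f.
Proof. by apply/matrixP => i j; rewrite !mxE ord1. Qed.

Lemma sum_if_eq (V : nmodType) N j (F : nat -> V) : (j < N)%N ->
  \sum_(k < N) (if (k : nat) == j then F k else 0) = F j.
Proof.
move=> jN; rewrite (bigD1 (Ordinal jN)) //= eqxx big1 ?addr0 // => k.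
by rewrite -val_eqE /= => /negbTE ->.
Qed.

Lemma sum_split3 (V : nmodType) s l (Fs f : nat -> V) (g : V) : (l < s)%N ->
  (forall k, (k < l)%N -> Fs k = f k) -> Fs l = g -> (forall k, (l < k)%N -> Fs k = 0) ->
  \sum_(k < s) Fs k = \sum_(k < l) f k + g.
Proof.
move=> ls H1 H2 H3.
rewrite -(big_mkord xpredT Fs) -(big_mkord xpredT f) (@big_cat_nat _ _ _ l) //=; last exact: ltnW.
rewrite [X in _ + X]big_ltn // H2.
rewrite [X in _ + (_ + X)]big1_seq ?addr0; last first.
  by move=> k /andP[_]; rewrite mem_index_iota => /andP[lk _]; rewrite H3.
by congr (_ + _); apply: eq_big_nat => k /andP[_ kl]; rewrite H1.
Qed.

Lemma unit_blockmx a r (f : nat -> nat -> 'M[R]_r) :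
  (forall i, (i < a)%N -> f i i = 1%:M) ->
  (forall i j, (i < j)%N -> (j < a)%N -> f i j = 0) -> blockmx a a f \in unitmx.
Proof.
move=> Hd Hu; rewrite unitmxE det_trig.
  rewrite big1 ?unitr1 // => i _; rewrite mxE Hd ?div_lt // mxE eqxx //.
apply/is_trig_mxP => i j ij; rewrite mxE.
have ja := div_lt j.
have : (i %/ r <= j %/ r)%N by apply: leq_div2r; apply: ltnW.
rewrite leq_eqVlt => /orP[/eqP e|lt]; last by rewrite Hu // mxE.
rewrite e Hd // mxE; case: eqP => // /(congr1 val) /= em.
have eij : (i : nat) = j by rewrite (divn_eq i r) (divn_eq j r) e em.
by move: ij; rewrite eij ltnn.
Qed.
End Gen.


Ltac simpif := repeat (first [rewrite ifT; last lia | rewrite ifF; last lia]).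

Section Sys.
Variables (R : realType) (n m p s : nat).
Variables (A : 'M[R]_n) (B : 'M[R]_(n, p)) (C : 'M[R]_(m, n)) (D : 'M[R]_(m, p))
    (F : 'M[R]_(p, n)) (L : 'M[R]_(n, m)).

Definition Tb l k : 'M[R]_(m, p) :=
  if (k < l)%N then C *m A ^+ (l - k - 1) *m B else if l == k then D else 0.
Definition Rb l k : 'M[R]_m :=
  if (k < l)%N then C *m A ^+ (l - k - 1) *m L else if l == k then 1%:M else 0.

Lemma mulmx_exprS (M : 'M[R]_n) k : M ^+ k.+1 = M *m M ^+ k.
Proof. by rewrite exprS mulmxE. Qed.
Lemma mulmx_exprSr (M : 'M[R]_n) k : M ^+ k.+1 = M ^+ k *m M.
Proof. by rewrite exprSr mulmxE. Qed.
Lemma mulmx_exprD (M : 'M[R]_n) a b : M ^+ (a + b) = M ^+ a *m M ^+ b.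
Proof. by rewrite exprD mulmxE. Qed.

Lemma traj q (x : nat -> 'M[R]_(n, q)) (u : nat -> 'M[R]_(p, q)) (w : nat -> 'M[R]_(m, q)) N :
  (forall t, (t < N)%N -> x t.+1 = A *m x t + B *m u t + L *m w t) ->
  x N = A ^+ N *m x 0%N + \sum_(k < N) A ^+ (N - k - 1) *m (B *m u k + L *m w k).
Proof.
elim: N => [|N IH] H; first by rewrite expr0 mul1mx big_ord0 addr0.
rewrite H // IH; last by move=> t tN; apply: H; lia.
rewrite big_ord_recr /=.
have -> : (N.+1 - N - 1 = 0)%N by lia.
rewrite expr0 mul1mx mulmxDr mulmxA -mulmx_exprS mulmx_sumr -!addrA; congr (_ + _).
congr (_ + _); apply: eq_bigr => k _.
rewrite mulmxA -mulmx_exprS; congr (_ ^+ _ *m _).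
have := ltn_ord k; lia.
Qed.

Lemma out q (x : nat -> 'M[R]_(n, q)) (u : nat -> 'M[R]_(p, q)) (w : nat -> 'M[R]_(m, q)) l :
  (l < s)%N ->
  (forall t, (t < l)%N -> x t.+1 = A *m x t + B *m u t + L *m w t) ->
  C *m x l + D *m u l + w l =
  C *m A ^+ l *m x 0%N + \sum_(k < s) Tb l k *m u k + \sum_(k < s) Rb l k *m w k.
Proof.
move=> ls H; rewrite (traj H).
rewrite (@sum_split3 _ s l (fun k => Tb l k *m u k) (fun k => C *m A ^+ (l - k - 1) *m B *m u k) (D *m u l)) //; first last.
- by move=> k lk; rewrite /Tb ltnNge (ltnW lk) /= (ltn_eqF lk) mul0mx.
- by rewrite /Tb ltnn eqxx.
- by move=> k kl; rewrite /Tb kl.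
rewrite (@sum_split3 _ s l (fun k => Rb l k *m w k) (fun k => C *m A ^+ (l - k - 1) *m L *m w k) (w l)) //; first last.
- by move=> k lk; rewrite /Rb ltnNge (ltnW lk) /= (ltn_eqF lk) mul0mx.
- by rewrite /Rb ltnn eqxx mul1mx.
- by move=> k kl; rewrite /Rb kl.
rewrite mulmxDr mulmx_sumr mulmxA.
under eq_bigr => k _ do rewrite !mulmxDr !mulmxA.
rewrite big_split /= -!addrA; congr (_ + _); congr (_ + _); by rewrite addrCA.
Qed.

Definition AFm := AF A B F.
Definition Xb j : 'M[R]_(n, p) := if (j < n)%N then AFm ^+ (n - 1 - j) *m B else 0.
Definition Mb k j : 'M[R]_p := if (j <= n + k)%N then Mk A B F (n + k - j) else 0.
Definition Nb l j : 'M[R]_(m, p) := if (j <= n + l)%N then Nk A B C D F (n + l - j) else 0.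

Lemma L1blk l j : (l < s)%N -> Nb l j = C *m A ^+ l *m Xb j + \sum_(k < s) Tb l k *m Mb k j.
Proof.
move=> ls.
pose xi t : 'M[R]_(n, p) := if (j < n + t)%N then AFm ^+ (n + t - 1 - j) *m B else 0.
have H : forall t, (t < l)%N -> xi t.+1 = A *m xi t + B *m Mb t j + L *m (0 : 'M[R]_(m, p)).
  move=> t _; rewrite /xi /Mb mulmx0 addr0.
  case: (ltngtP j (n + t)) => h.
  - simpif.
    have -> : (n + t.+1 - 1 - j = (n + t - 1 - j).+1)%N by lia.
    have -> : (n + t - j = (n + t - 1 - j).+1)%N by lia.
    by rewrite /Mk /Yhk /= mulmx_exprS /AFm /AF !mulmxA !mulmxDl ?mulmxA.
  - simpif.
    by rewrite !mulmx0 addr0.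
  - simpif.
    have -> : (n + t.+1 - 1 - j = 0)%N by lia.
    have -> : (n + t - j = 0)%N by lia.
    by rewrite /Mk /Yhk /= expr0 mul1mx mulmx0 add0r mulmx1.
have E := out ls H.
have E0 : \sum_(k < s) Rb l k *m (0 : 'M[R]_(m, p)) = 0 by rewrite big1 // => k _; rewrite mulmx0.
rewrite E0 !addr0 in E.
have E1 : xi 0%N = Xb j by rewrite /xi /Xb addn0.
rewrite -E1 -E; rewrite /xi /Nb /Mb.
case: (ltngtP j (n + l)) => h.
- simpif.
  have -> : (n + l - j = (n + l - 1 - j).+1)%N by lia.
  by rewrite /Nk /Mk /Xhk /Yhk /= /AFm /CF !mulmxA !mulmxDl ?mulmxA.
- simpif. by rewrite !mulmx0 addr0.
- simpif.
  have -> : (n + l - j = 0)%N by lia.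
  by rewrite /Nk /Mk /Xhk /Yhk /= mulmx0 add0r mulmx1.
Qed.

Definition Xpb j : 'M[R]_(n, m) := if (j < n)%N then AFm ^+ (n - 1 - j) *m L else 0.
Definition Yhb k j : 'M[R]_(p, m) := if (j <= n + k)%N then Yhk A B F L (n + k - j) else 0.
Definition Xhb l j : 'M[R]_m := if (j <= n + l)%N then Xhk A B C D F L (n + l - j) else 0.
Definition Zb l j : 'M[R]_m := if (n <= j)%N then Rb l (j - n) else 0.

Lemma L2blk l j : (l < s)%N -> (j < s + n)%N ->
  Xhb l j = C *m A ^+ l *m Xpb j + \sum_(k < s) Tb l k *m Yhb k j + Zb l j.
Proof.
move=> ls js.
pose xi t : 'M[R]_(n, m) := if (j < n + t)%N then AFm ^+ (n + t - 1 - j) *m L else 0.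
pose w t : 'M[R]_m := if j == (n + t)%N then 1%:M else 0.
have H : forall t, (t < l)%N -> xi t.+1 = A *m xi t + B *m Yhb t j + L *m w t.
  move=> t _; rewrite /xi /Yhb /w.
  case: (ltngtP j (n + t)) => h.
  - simpif.
    have -> : (n + t.+1 - 1 - j = (n + t - 1 - j).+1)%N by lia.
    have -> : (n + t - j = (n + t - 1 - j).+1)%N by lia.
    by rewrite /Mk /Yhk /= mulmx_exprS /AFm /AF !mulmxA !mulmxDl ?mulmxA mulmx0 addr0.
  - simpif.
    by rewrite !mulmx0 !addr0.
  - simpif.
    have -> : (n + t.+1 - 1 - j = 0)%N by lia.
    have -> : (n + t - j = 0)%N by lia.
    by rewrite /Yhk /= expr0 mul1mx !mulmx0 !add0r mulmx1.
have E := out ls H.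
have E0 : \sum_(k < s) Rb l k *m w k = Zb l j.
  rewrite /Zb /w; case: leqP => nj.
    rewrite -(@sum_if_eq _ s (j - n) (Rb l)); last lia.
    apply: eq_bigr => k _; case: eqP => e.
      by rewrite ifT ?mulmx1 //; apply/eqP; lia.
    by rewrite ifF ?mulmx0 //; apply/eqP; lia.
  by rewrite big1 // => k _; rewrite ifF ?mulmx0 //; apply/eqP; lia.
have E1 : xi 0%N = Xpb j by rewrite /xi /Xpb addn0.
rewrite -E1 -E0 -E; rewrite /xi /Xhb /Yhb /w.
case: (ltngtP j (n + l)) => h.
- simpif.
  have -> : (n + l - j = (n + l - 1 - j).+1)%N by lia.
  by rewrite /Nk /Mk /Xhk /Yhk /= /AFm /CF !mulmxA !mulmxDl ?mulmxA addr0.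
- simpif.
  by rewrite !mulmx0 !addr0.
- simpif.
  have -> : (n + l - j = 0)%N by lia.
  by rewrite /Nk /Mk /Xhk /Yhk /= mulmx0 add0r mulmx0 add0r.
Qed.

End Sys.


Lemma cancel3 (V : zmodType) (a b c : V) : - b + (a + b + c) = a + c.
Proof. by rewrite addrC addrAC addrK. Qed.

Section Main.
Variables (R : realType) (n m p s : nat).
Variables (A : 'M[R]_n) (B : 'M[R]_(n, p)) (C : 'M[R]_(m, n)) (D : 'M[R]_(m, p))
    (F : 'M[R]_(p, n)) (L : 'M[R]_(n, m)).

Lemma obsmx_bcol : obsmx A C s = bcol s (fun l => C *m A ^+ l).
Proof. by []. Qed.

Lemma ctrb_brow (M : 'M[R]_n) : ctrbmx M B = brow n (fun k => M ^+ k *m B).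
Proof. by []. Qed.

Lemma HN : Ns s A B C D F =
  obsmx A C s *m brow (s + n) (Xb A B F) + toeplitzG s A B C D *m Ms s A B F.
Proof.
rewrite obsmx_bcol bcol_mul_brow /toeplitzG /Ms blockmx_mul blockmxD /Ns.
apply: blockmx_ext => l j ls _; exact: L1blk.
Qed.

Lemma HXh : Xhs s A B C D F L =
  obsmx A C s *m brow (s + n) (Xpb A B F L) + toeplitzG s A B C D *m Yhs s A B F L
  + blockmx s (s + n) (Zb A C L).
Proof.
rewrite obsmx_bcol bcol_mul_brow /toeplitzG /Yhs blockmx_mul !blockmxD /Xhs.
apply: blockmx_ext => l j ls js; exact: L2blk.
Qed.

Definition SelL q : 'M[R]_((s + n) * q, s * q) :=
  blockmx (s + n) s (fun j l => if j == (n + l)%N then 1%:M else 0).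
Definition SelRev q : 'M[R]_((s + n) * q, n * q) :=
  blockmx (s + n) n (fun j i => if j == (n - 1 - i)%N then 1%:M else 0).

Lemma selL_blk a r q (f : nat -> nat -> 'M[R]_(r, q)) :
  blockmx a (s + n) f *m SelL q = blockmx a s (fun i l => f i (n + l)%N).
Proof.
rewrite blockmx_mul; apply: blockmx_ext => i l _ ls.
rewrite -(@sum_if_eq _ (s + n) (n + l) (f i)); last lia.
by apply: eq_bigr => k _; case: eqP => _; rewrite ?mulmx1 ?mulmx0.
Qed.

Lemma selL_brow q' q (g : nat -> 'M[R]_(q', q)) :
  brow (s + n) g *m SelL q = brow s (fun l => g (n + l)%N).
Proof.
rewrite brow_mul_blockmx; apply: brow_ext => l ls.
rewrite -(@sum_if_eq _ (s + n) (n + l) g); last lia.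
by apply: eq_bigr => k _; case: eqP => _; rewrite ?mulmx1 ?mulmx0.
Qed.

Lemma selRev_brow q' q (g : nat -> 'M[R]_(q', q)) :
  brow (s + n) g *m SelRev q = brow n (fun i => g (n - 1 - i)%N).
Proof.
rewrite brow_mul_blockmx; apply: brow_ext => i ls.
rewrite -(@sum_if_eq _ (s + n) (n - 1 - i) g); last lia.
by apply: eq_bigr => k _; case: eqP => _; rewrite ?mulmx1 ?mulmx0.
Qed.

Lemma brow0 b c q : brow b (fun _ => 0 : 'M[R]_(q, c)) = 0.
Proof. by apply/matrixP => i j; rewrite !mxE. Qed.

Lemma ctrb_transfer k (v : 'M[R]_(k, n)) :
  v *m ctrbmx (AF A B F) B = 0 -> v *m ctrbmx A B = 0.
Proof.
rewrite !ctrb_brow !mul_brow => H0.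
have Hk := brow_eq0 H0.
have eAF : forall q (X : 'M[R]_(q, n)), X *m AF A B F = X *m A + (X *m B) *m F.
  by move=> q X; rewrite /AF mulmxDr mulmxA.
have E : forall j, (j < n)%N -> v *m AF A B F ^+ j = v *m A ^+ j.
  elim => [|j IH] jn; first by rewrite !expr0.
  rewrite !mulmx_exprSr !mulmxA eAF -(mulmxA v (AF A B F ^+ j) B) Hk; last lia.
  by rewrite mul0mx addr0 IH //; lia.
rewrite -(brow0 n p k); apply: brow_ext => j jn.
by rewrite mulmxA -E // -mulmxA Hk.
Qed.

Lemma Mlast_unit : blockmx s s (fun i l =>
    if (n + l <= n + i)%N then Mk A B F (n + i - (n + l)) else 0) \in unitmx.
Proof.
apply: unit_blockmx => [i _|i j ij _]; first by rewrite leqnn subnn.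
by rewrite ifF //; lia.
Qed.

Lemma Rmat_unit : Rmat s A C L \in unitmx.
Proof.
apply: unit_blockmx => [i _|i j ij _]; first by rewrite ltnn eqxx.
by rewrite ltnNge (ltnW ij) /= (ltn_eqF ij).
Qed.

Lemma dsub_bcol q (g : nat -> 'M[R]_(m, q)) :
  dsubmx (castmx (mulnDl n s m, erefl q) (bcol (n + s) g)) = bcol s (fun i => g (n + i)%N).
Proof.
apply/matrixP => i j; rewrite !mxE castmxE /= !mxE.
case: (posnP m) => [m0|mp].
  by move: (ltn_ord i); rewrite {2}m0 muln0.
have e1 : ((cast_ord (esym (mulnDl n s m)) (rshift (n * m) i)) %/ m = n + i %/ m)%N.
  by rewrite /= divnMDl.
rewrite e1; congr (g _ _ _); apply: val_inj => //=.
by rewrite modnMDl.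
Qed.

End Main.


Unset Implicit Arguments. Set Strict Implicit.


Theorem theorem4 (R : realType) (n m p s : nat)
    (A : 'M[R]_n) (B : 'M[R]_(n, p)) (C : 'M[R]_(m, n)) (D : 'M[R]_(m, p))
    (F : 'M[R]_(p, n)) (L : 'M[R]_(n, m))
    (K : 'M[R]_(s * m - n, s * p + s * m)) :
  (1 <= n)%N -> controllable A B -> observable A C -> (mu_obs A C < s)%N ->
  ((K *m IG s A B C D F = 0 /\ \rank (K *m IC s A B C D F L) = (s * m - n)%N)
    <-> exists K2 : 'M[R]_(s * m - n, s * m),
      [/\ K = K2 *m row_mx (- toeplitzG s A B C D) 1%:M,
          K2 *m obsmx A C s = 0 & \rank K2 = (s * m - n)%N])
  /\
  (forall K2 : 'M[R]_(s * m - n, s * m),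
      K = K2 *m row_mx (- toeplitzG s A B C D) 1%:M ->
      K2 *m obsmx A C s = 0 -> \rank K2 = (s * m - n)%N ->
      forall (u : int -> 'cV[R]_p) (y r : int -> 'cV[R]_m) (xh : int -> 'cV[R]_n)
             (k : int),
      (forall j : int, k - n%:Z + 1 <= j <= k + s%:Z ->
         y j = C *m xh j + D *m u j + r j) ->
      (forall j : int, k - n%:Z + 1 <= j < k + s%:Z ->
         xh (j + 1) = A *m xh j + B *m u j + L *m r j) ->
      K *m col_mx (sigs s u k) (sigs s y k) = K2 *m rbar s A C L r k).
Proof.
move=> n1 Hc _ _.
have HN := HN s A B C D F L.
have HXh := HXh s A B C D F L.
split.
  split.
  - case=> HK Hr.
    have eK := hsubmxK K.
    move: HK Hr; rewrite -eK /IG mul_row_col.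
    move: (lsubmx K) (rsubmx K) => Ku Ky HK Hr.
    rewrite HN in HK.
    have H2 : (Ku + Ky *m toeplitzG s A B C D) *m Ms s A B F
              + (Ky *m obsmx A C s) *m brow (s + n) (Xb A B F) = 0.
      by rewrite -HK mulmxDr mulmxDl !mulmxA -!addrA [X in _ + X]addrC.
    have H3 := congr1 (mulmx^~ (SelL R n s p)) H2.
    rewrite /= mul0mx mulmxDl -!mulmxA /Ms selL_blk selL_brow in H3.
    have XS : brow s (fun l => Xb A B F (n + l)) = 0.
      rewrite -(brow0 R s p n); apply: brow_ext => i _; rewrite /Xb ifF //; lia.
    rewrite XS !mulmx0 addr0 in H3.
    have H4 : Ku + Ky *m toeplitzG s A B C D = 0.
      apply: (row_free_inj (A := blockmx s s (fun i l =>
          if (n + l <= n + i)%N then Mk A B F (n + i - (n + l)) else 0))).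
        by rewrite row_free_unit; exact: Mlast_unit.
      by rewrite H3 mul0mx.
    rewrite H4 mul0mx add0r in H2.
    have H5 := congr1 (mulmx^~ (SelRev R n s p)) H2.
    rewrite /= mul0mx -mulmxA selRev_brow in H5.
    have EC : brow n (fun i => Xb A B F (n - 1 - i)) = ctrbmx (AF A B F) B.
      rewrite ctrb_brow; apply: brow_ext => i ni; rewrite /Xb /AFm ifT; last lia.
      by have -> : (n - 1 - (n - 1 - i) = i)%N by lia.
    rewrite EC in H5.
    have H6 : Ky *m obsmx A C s = 0.
      apply: (row_free_inj (A := ctrbmx A B)); first by rewrite /row_free Hc.
      rewrite mul0mx; apply: (ctrb_transfer (F := F)); exact: H5.
    have eK2 : row_mx Ku Ky = Ky *m row_mx (- toeplitzG s A B C D) 1%:M.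
      rewrite mul_mx_row mulmxN mulmx1; congr row_mx.
      by apply/eqP; rewrite -addr_eq0; apply/eqP.
    exists Ky; split => //.
    apply/eqP; rewrite eqn_leq rank_leq_row /= -{1}Hr eK2 -mulmxA.
    exact: mxrankM_maxl.
  - case=> K2 [eK HO HrK]; split.
      rewrite eK /IG -mulmxA mul_row_col mul1mx HN mulNmx.
      rewrite addrC addrK mulmxA HO mul0mx //.
    have EZ : K *m IC s A B C D F L = K2 *m blockmx s (s + n) (Zb A C L).
      rewrite eK /IC -mulmxA mul_row_col mul1mx HXh mulNmx cancel3.
      by rewrite mulmxDr mulmxA HO mul0mx add0r.
    apply/eqP; rewrite eqn_leq rank_leq_row /= -{1}HrK EZ.
    rewrite -(mxrankMfree K2 (_ : row_free (Rmat s A C L))); last first.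
      by rewrite row_free_unit Rmat_unit.
    have -> : Rmat s A C L = blockmx s (s + n) (Zb A C L) *m SelL R n s m.
      rewrite selL_blk; apply: blockmx_ext => i l _ _.
      by rewrite /Zb leq_addr addKn.
    by rewrite mulmxA mxrankM_maxl.
move=> K2 eK HO HrK u y r xh k Hy Hx.
have Hsy : sigs s y k = obsmx A C s *m xh (k + 1%:Z) + toeplitzG s A B C D *m sigs s u k
                        + Rmat s A C L *m sigs s r k.
  rewrite /sigs !stackv_bcol /toeplitzG /Rmat !blockmx_mul_bcol obsmx_bcol -bcol_mulr !bcolD.
  apply: bcol_ext => l ls.
  have E := @out _ _ _ _ s A B C D L _ (fun t => xh (k + (t.+1)%:Z)) (fun t => u (k + (t.+1)%:Z)) (fun t => r (k + (t.+1)%:Z)) _ ls.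
  rewrite Hy; last lia.
  apply: E => t tl /=.
  have -> : k + (t.+2)%:Z = k + (t.+1)%:Z + 1 by lia.
  apply: Hx; lia.
have Hrbar : rbar s A C L r k = obsmx A C s *m
      (\sum_(j < n) A ^+ (n - 1 - j) *m L *m r (k - n%:Z + (j.+1)%:Z))
      + Rmat s A C L *m sigs s r k.
  rewrite /rbar /sigs !stackv_bcol /Rmat !blockmx_mul_bcol dsub_bcol obsmx_bcol -bcol_mulr bcolD.
  apply: bcol_ext => l ls.
  rewrite big_split_ord /=; congr (_ + _).
    rewrite mulmx_sumr; apply: eq_bigr => j _ /=.
    rewrite ifT; last by have := ltn_ord j; lia.
    have -> : (n + l - j - 1 = l + (n - 1 - j))%N by have := ltn_ord j; lia.
    by rewrite mulmx_exprD !mulmxA.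
  apply: eq_bigr => j _ /=.
  have -> : k - n%:Z + ((n + j).+1)%:Z = k + (j.+1)%:Z by lia.
  by rewrite ltn_add2l eqn_add2l subnDl.
rewrite eK -mulmxA mul_row_col mul1mx mulNmx Hsy Hrbar cancel3.
by rewrite !mulmxDr !mulmxA HO !mul0mx !add0r.
Qed.
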